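(* Fix a capacity $q$, a reservation vector $\kappa$ and a hierarchical horizontal type correspondence $\rho$. The hierarchical choice rule $A\mapsto C^h(A,\kappa,\rho)$ satisfies (i) the substitutes property: for every set $A$ of individuals and distinct individuals $i,j\notin A$, if $i\in C^h(A\cup\{i,j\},\kappa,\rho)$ then $i\in C^h(A\cup\{i\},\kappa,\rho)$; and (ii) size monotonicity: for every $A$ and every individual $i$, $|C^h(A,\kappa,\rho)|\le|C^h(A\cup\{i\},\kappa,\rho)|$.
   Context: Setting. $I$ is a finite set of individuals with a strict merit ranking $\succ$. $H=\{h_1,\dots,h_L\}$ is a set of horizontal types and $\rho(i)\subseteq H$ is the set of horizontal types of $i$; $\rho^{-1}(h)=\{i:h\in\rho(i)\}$. Hierarchical: for any $h,h'$ with $\rho^{-1}(h)\cap\rho^{-1}(h')\neq\emptyset$, either $\rho^{-1}(h)\subsetneq\rho^{-1}(h')$ or $\rho^{-1}(h')\subsetneq\rho^{-1}(h)$; in the latter case $h$ contains $h'$. There are $q$ positions and $\kappa_j\in\mathbb{Z}_+$ positions reserved for $h_j$; a chosen individual counts against every type she has. Hierarchical choice rule $C^h(A,\kappa,\rho)$: Step 1: let $H^1$ be the types containing no other type. If no individual in $A$ has any horizontal type, choose the $\min(q,|A|)$ highest-ranked individuals and stop. Otherwise, for each $h_j\in H^1$ (in a fixed order, never exceeding the remaining positions), choose all not-yet-chosen individuals of $A$ of type $h_j$ if there are at most $\kappa_j$ of them, and otherwise the $\kappa_j$ highest-ranked; reduce the available positions and the reservation of every type containing $h_j$ by the number chosen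 (floored at $0$); remove $h_j$. Step $n\ge2$: stop if no positions or individuals remain; if no type remains, fill remaining positions with the highest-ranked remaining individuals and stop; otherwise let $H^n$ be the remaining types containing no other remaining type and process each $h_j\in H^n$ as in Step 1 with the updated reservation. $C^h(A,\kappa,\rho)$ is the set of all individuals chosen. *)

(* Defs.v *)
From mathcomp Require Import all_boot.
Set Implicit Arguments. Unset Strict Implicit. Unset Printing Implicit Defensive.

Section Hier.
Variables (I H : finType).
(* merit ranking: rk i < rk j  means  i is ranked higher than j (i ≻ j) *)
Variable rk : I -> nat.
Variable rho : I -> {set H}.
Variable q : nat.
Variable kappa : H -> nat.

Definition typ (h : H) : {set I} := [set i | h \in rho i].

Definition overlap (h h' : H) : bool := [exists i, (h \in rho i) && (h' \in rho i)].

Definition contains (h h' : H) : bool := overlap h h' && (typ h' \proper typ h).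

Definition hierarchical : Prop :=
  forall h h', h != h' -> overlap h h' ->
    typ h \proper typ h' \/ typ h' \proper typ h.

(* the k highest-ranked members of S (all of S if |S| <= k) *)
Definition top (k : nat) (S : {set I}) : {set I} :=
  [set x in S | #|[set y in S | rk y < rk x]| < k].

(* state while processing: chosen set, available positions, current reservations *)
Definition pstate := ({set I} * nat * (H -> nat))%type.

Definition proc (A : {set I}) (st : pstate) (h : H) : pstate :=
  let: (C, p, res) := st in
  let av := [set i in A :\: C | h \in rho i] in
  let k := minn p (minn #|av| (res h)) in
  (C :|: top k av, p - k, fun h' => if contains h' h then res h' - k else res h').

Definition minimal_types (remT : {set H}) : {set H} :=
  [set h in remT | [forall h' in remT, ~~ contains h h']].

Definition level (A : {set I}) (remT : {set H}) (st : pstate) : pstate * {set H} :=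
  let Hn := minimal_types remT in
  (foldl (fun st h => if h \in Hn then proc A st h else st) st (enum H), remT :\: Hn).

(* full state: processing state, remaining types, stopped flag *)
Definition fstate := (pstate * {set H} * bool)%type.

Definition stepn (A : {set I}) (s : fstate) : fstate :=
  let: (st, remT, done) := s in
  if done then s else
  let: (C, p, res) := st in
  if (p == 0) || (A :\: C == set0) then (st, remT, true)
  else if remT == set0 then ((C :|: top p (A :\: C), 0, res), remT, true)
  else let: (st', remT') := level A remT st in (st', remT', false).

(* the hierarchical choice rule C^h(A, kappa, rho); #|H|.+1 steps suffice since
   each step n >= 2 either stops or removes a nonempty level of types *)
Definition Ch (A : {set I}) : {set I} :=
  if [forall i in A, rho i == set0] then top q A
  else
    let: (st1, rem1) := level A setT (set0, q, kappa) in
    let: (stf, _, _) := iter #|H|.+1 (stepn A) (st1, rem1, false) in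
    let: (C, _, _) := stf in C.

End Hier.

(* Main.v *)
Require Import Defs.
From mathcomp Require Import all_boot.
From mathcomp Require Import zify.
Set Implicit Arguments. Unset Strict Implicit. Unset Printing Implicit Defensive.

Lemma kmin k p a r : k = minn p (minn a r) -> k <= p /\ k <= a.
Proof. lia. Qed.
Lemma kE p a a' r kX kY : kX = minn p (minn a r) -> kY = minn p (minn a' r) ->
  a <= a' -> a' <= a + 1 -> kX <= kY /\ (kY <= kX \/ a <= kX).
Proof. lia. Qed.
Lemma kF0 p a c c' kap kX kY : kX = minn p.+1 (minn a (kap - c)) ->
  kY = minn p (minn a (kap - c')) -> c <= c' -> c' <= c + 1 ->
  kY <= kX /\ kX <= kY + 1 /\ (c = c' -> kX = kY + 1 -> kY = p).
Proof. lia. Qed.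

Section Top.
Variables (I : finType) (rk : I -> nat).
Hypothesis rk_inj : injective rk.

Definition rnk (S : {set I}) x := #|[set y in S | rk y < rk x]|.

Lemma in_top k (S : {set I}) x : (x \in top rk k S) = (x \in S) && (rnk S x < k).
Proof. by rewrite inE. Qed.

Lemma top_sub k (S : {set I}) : top rk k S \subset S.
Proof. by apply/subsetP => x; rewrite in_top => /andP[]. Qed.

Lemma top_monok k k' (S : {set I}) : k <= k' -> top rk k S \subset top rk k' S.
Proof.
move=> le; apply/subsetP => x; rewrite !in_top => /andP[-> h] /=.
exact: leq_trans h le.
Qed.

Lemma rnk_sub (S S' : {set I}) x : S \subset S' -> rnk S x <= rnk S' x.
Proof.
move=> sub; apply: subset_leq_card; apply/subsetP => y; rewrite !inE.
by case/andP => /(subsetP sub) -> ->.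
Qed.

Lemma top_subS k (S S' : {set I}) x : S \subset S' -> x \in S -> x \in top rk k S' ->
  x \in top rk k S.
Proof.
move=> sub xS; rewrite !in_top xS /= => /andP[_ h].
exact: leq_ltn_trans (rnk_sub x sub) h.
Qed.

Lemma top_card k : forall S : {set I}, #|top rk k S| = minn k #|S|.
Proof.
move=> S; move: {2}#|S| (erefl #|S|) => n; elim: n S => [|n IH] S cS.
  rewrite cS minn0; apply/eqP; rewrite -leqn0 -cS; exact: subset_leq_card (top_sub k S).
case: (set_0Vmem S) => [S0|[x0 x0S]]; first by rewrite S0 cards0 in cS.
case: (arg_maxnP rk x0S) => m mS0 mmax0.
have mS : m \in S := mS0.
have mmax : forall y, y \in S -> rk y <= rk m := mmax0.
have cS' : #|S :\ m| = n.
  by move: cS; rewrite (cardsD1 m S) mS add1n => -[].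
have rx : forall x, x \in S :\ m -> rnk S x = rnk (S :\ m) x.
  move=> x; rewrite !inE => /andP[xm xS]; apply: eq_card => y.
  rewrite !inE; case ym: (y == m); last by [].
  by rewrite (eqP ym) /= mS /= ltnNge mmax.
have rm : rnk S m = n.
  rewrite -cS'; apply: eq_card => y; rewrite !inE.
  case yS: (y \in S); rewrite ?andbF ?andbT //=.
  rewrite ltn_neqAle mmax // andbT; case ym: (y == m) => /=.
    by rewrite (eqP ym) eqxx.
  by apply/negP => /eqP /rk_inj /eqP; rewrite ym.
have e : top rk k S :\ m = top rk k (S :\ m).
  apply/setP => x; rewrite !inE.
  case xm: (x == m) => //=; case xS: (x \in S) => //=.
  by have := rx x; rewrite /rnk !inE xm xS => ->.
rewrite cS (cardsD1 m (top rk k S)) e IH // in_top mS rm /=. lia.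
Qed.

Lemma top_all k (S : {set I}) : #|S| <= k -> top rk k S = S.
Proof.
move=> le; apply/eqP; rewrite eqEcard top_sub top_card /=; lia.
Qed.

Lemma top_small k k' (S : {set I}) y : y \in top rk k' S -> (k' <= k \/ #|S| <= k) ->
  y \in top rk k S.
Proof.
move=> yT [le|le]; first exact: (subsetP (top_monok S le)).
by rewrite top_all // (subsetP (top_sub k' S)).
Qed.

Lemma top0 (S : {set I}) : top rk 0 S = set0.
Proof. by apply/setP => x; rewrite inE ltn0 andbF inE. Qed.

Lemma top_set0 k : top rk k set0 = set0.
Proof. by apply/setP => x; rewrite inE !in_set0. Qed.

End Top.

Section Main.
Variables (I H : finType) (rk : I -> nat).
Hypothesis rk_inj : injective rk.
Variable rho : I -> {set H}.
Hypothesis hier : hierarchical rho.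
Variables (q : nat) (kappa : H -> nat).

Local Notation typ := (typ rho).
Local Notation contains := (contains rho).
Local Notation top := (top rk).

Lemma typE h x : (x \in typ h) = (h \in rho x).
Proof. by rewrite inE. Qed.

Lemma contains_sub h h' : contains h h' -> typ h' \subset typ h.
Proof. by case/andP => _ /proper_sub. Qed.

Lemma overlapI h h' x : x \in typ h -> x \in typ h' -> overlap rho h h'.
Proof. by rewrite !typE => a b; apply/existsP; exists x; rewrite a b. Qed.

Lemma hier_sub h h' x : h' != h -> ~~ contains h h' -> x \in typ h -> x \in typ h' ->
  typ h \subset typ h'.
Proof.
move=> ne nc xh xh'.
have ov := overlapI xh xh'.
case: (hier (h:=h) (h':=h')) => //; first by rewrite eq_sym.
  exact: proper_sub.
by move=> pr; move: nc; rewrite /Defs.contains ov pr.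
Qed.

Lemma hier_disj h h' x : h' != h -> ~~ contains h h' -> ~~ contains h' h ->
  x \in typ h -> x \in typ h' -> False.
Proof.
move=> ne nc nc' xh xh'.
have ov := overlapI xh xh'.
have ov' := overlapI xh' xh.
case: (hier (h:=h) (h':=h')) => //; first by rewrite eq_sym.
  by move=> pr; move: nc'; rewrite /Defs.contains ov' pr.
by move=> pr; move: nc; rewrite /Defs.contains ov pr.
Qed.

Definition minimal (U : {set H}) h := forall h', h' \in U -> ~~ contains h h'.

Lemma G U h z j h' : minimal U h -> z \in typ h -> j \in typ h -> h' \in U :\ h ->
  (z \in typ h') = (j \in typ h').
Proof.
move=> mn zh jh; rewrite in_setD1 => /andP[ne hU].
apply/idP/idP => a.
  exact: (subsetP (hier_sub ne (mn _ hU) zh a)) _ jh.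
exact: (subsetP (hier_sub ne (mn _ hU) jh a)) _ zh.
Qed.

Lemma cardUI_disj (C T S : {set I}) : (forall x, x \in T -> x \notin C) ->
  #|(C :|: T) :&: S| = #|C :&: S| + #|T :&: S|.
Proof.
move=> d; rewrite setIUl cardsU.
have -> : (C :&: S) :&: (T :&: S) = set0.
  apply/setP => x; rewrite !inE; apply/negP => /andP[/andP[a _] /andP[b _]].
  by move: (d _ b); rewrite a.
by rewrite cards0 subn0.
Qed.

Definition good (A : {set I}) (U : {set H}) (st : pstate I H) :=
  let: (C, p, r) := st in
  C \subset A /\ forall h, h \in U -> r h = kappa h - #|C :&: typ h|.

Lemma top_card_le k (S : {set I}) : k <= #|S| -> #|top k S| = k.
Proof. move=> le; rewrite top_card //; lia. Qed.

Lemma good_proc (A : {set I}) (U : {set H}) h (C : {set I}) p r : h \in U -> minimal U h -> good A U (C, p, r) ->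
  good A (U :\ h) (proc rk rho A (C, p, r) h).
Proof.
move=> hU mn [CA rc]; rewrite /proc.
set av := [set i in A :\: C | h \in rho i].
set k := minn p (minn #|av| (r h)).
have avs : av \subset A :\: C by apply/subsetP => x; rewrite inE => /andP[].
have Ts : top k av \subset av := top_sub _ _ _.
have dj : forall x, x \in top k av -> x \notin C.
  by move=> x /(subsetP Ts) /(subsetP avs); rewrite inE => /andP[].
have Th : top k av \subset typ h.
  by apply/subsetP => x /(subsetP Ts); rewrite inE typE => /andP[].
split.
  rewrite subUset CA /=; apply: subset_trans Ts (subset_trans avs _).
  exact: subsetDl.
move=> h'; rewrite in_setD1 => /andP[ne h'U].
rewrite (cardUI_disj _ dj) rc //.
case: ifP => ch.
  have -> : top k av :&: typ h' = top k av.
    by apply/setIidPl; apply: subset_trans Th (contains_sub ch).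
  rewrite top_card_le; first by rewrite subnDA.
  rewrite /k; lia.
have -> : top k av :&: typ h' = set0.
  apply/setP => x; rewrite in_setI in_set0; apply/negP => /andP[xT xh'].
  exact: (hier_disj ne (mn _ h'U) (negbT ch) (subsetP Th _ xT) xh').
by rewrite cards0 addn0.
Qed.


Lemma Dcard (A B : {set I}) j : j \notin A -> j \in B -> B :\ j \subset A ->
  #|A :\: B| + #|B| = #|A| + 1.
Proof.
move=> jA jB sub.
have e : A :&: B = B :\ j.
  apply/setP => x; rewrite !inE; case xj: (x == j).
    by rewrite (eqP xj) (negbTE jA).
  case xB: (x \in B); rewrite ?andbF //= andbT.
  by apply: (subsetP sub); rewrite !inE xj xB.
have := subset_leq_card (subsetIl A B).
rewrite cardsD e (cardsD1 j B) jB; lia.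
Qed.

Lemma cardU_disj (C T : {set I}) : (forall x, x \in T -> x \notin C) ->
  #|C :|: T| = #|C| + #|T|.
Proof.
move=> d; rewrite cardsU.
have -> : C :&: T = set0.
  by apply/setP => x; rewrite !inE; apply/negP => /andP[a b]; move: (d _ b); rewrite a.
by rewrite cards0 subn0.
Qed.

Lemma restrictU (U : {set H}) h (P : H -> Prop) :
  (forall h', h' \in U -> P h') -> forall h', h' \in U :\ h -> P h'.
Proof. by move=> a h'; rewrite in_setD1 => /andP[_ /a]. Qed.

Definition fillS (A : {set I}) (st : pstate I H) : pstate I H :=
  let: (C, p, r) := st in (C :|: top p (A :\: C), 0, r).

Definition stepI (A : {set I}) (s : pstate I H * {set H}) : pstate I H * {set H} :=
  let: (st, remT) := s in
  if remT == set0 then (fillS A st, remT) else level rk rho A remT st.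

Lemma good_fill (A : {set I}) st : good A set0 st -> good A set0 (fillS A st).
Proof.
case: st => [[C p] r] [CA _]; split; last by move=> h; rewrite inE.
rewrite subUset CA /=; apply: subset_trans (top_sub _ _ _) _; exact: subsetDl.
Qed.

Lemma minimal_of (remT U : {set H}) h : U \subset remT -> h \in minimal_types rho remT ->
  minimal U h.
Proof.
move=> sU; rewrite inE => /andP[_ /forall_inP mn] h' /(subsetP sU); exact: mn.
Qed.

Lemma proc_zero (A : {set I}) C p r h :
  (p = 0 \/ [set i in A :\: C | h \in rho i] = set0) ->
  (proc rk rho A (C, p, r) h).1 = (C, p).
Proof.
rewrite /proc /= => hz.
have -> : minn p (minn #|[set i in A :\: C | h \in rho i]| (r h)) = 0.
  by case: hz => [->|->]; rewrite ?cards0 ?min0n // minnC min0n.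
by rewrite top0 setU0 subn0.
Qed.

Lemma foldl_ind (A : {set I}) (P : pstate I H -> Prop) (Hn : {set H}) s st :
  (forall st h, P st -> P (proc rk rho A st h)) -> P st ->
  P (foldl (fun st h => if h \in Hn then proc rk rho A st h else st) st s).
Proof.
move=> Pp; elim: s st => //= a s IH st Pst; apply: IH.
by case: ifP => // _; apply: Pp.
Qed.

Lemma stepI1 (A : {set I}) (P : pstate I H -> Prop) t :
  (forall st h, P st -> P (proc rk rho A st h)) -> (forall st, P st -> P (fillS A st)) ->
  P t.1 -> P (stepI A t).1.
Proof.
move=> Pp Pf; case: t => st remT /= Pst; rewrite /stepI.
case: eqP => _ /=; first exact: Pf.
exact: foldl_ind.
Qed.

Lemma stepI_ind (A : {set I}) (P : pstate I H -> Prop) n t :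
  (forall st h, P st -> P (proc rk rho A st h)) -> (forall st, P st -> P (fillS A st)) ->
  P t.1 -> P (iter n (stepI A) t).1.
Proof.
move=> Pp Pf; elim: n => //= n IH Pt; exact: stepI1 (IH Pt).
Qed.

Lemma minimal_nonempty (remT : {set H}) : remT != set0 ->
  exists h, h \in remT :&: minimal_types rho remT.
Proof.
case/set0Pn => h0 h0in.
case: (arg_minnP (fun h => #|typ h|) h0in) => h hin0 hmin0.
have hin : h \in remT := hin0.
have hmin : forall h', h' \in remT -> #|typ h| <= #|typ h'| := hmin0.
exists h; rewrite in_setI hin inE hin /=; apply/forall_inP => h' h'in.
apply/negP => /andP[_ pr]; have := proper_card pr.
by rewrite ltnNge hmin.
Qed.

Lemma level_card (A : {set I}) remT st : remT != set0 ->
  #|(level rk rho A remT st).2| < #|remT|.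
Proof.
move=> ne; rewrite /level /= cardsD.
have [h hin] := minimal_nonempty ne.
have : 0 < #|remT :&: minimal_types rho remT| by apply/card_gt0P; exists h.
have := subset_leq_card (subsetIl remT (minimal_types rho remT)); lia.
Qed.

Definition Pc (A : {set I}) (st : pstate I H) :=
  let: (C, p, _) := st in
  C \subset A /\ (#|C| + p = q \/ (p = 0 /\ #|C| = minn q #|A|)).
Definition Qc (A : {set I}) (st : pstate I H) :=
  let: (C, p, _) := st in C \subset A /\ p = 0 /\ #|C| = minn q #|A|.

Lemma Qc_proc A st h : Qc A st -> Qc A (proc rk rho A st h).
Proof.
case: st => [[C p] r] [CA [p0 cC]].
have := proc_zero (A:=A) (C:=C) (h:=h) r (or_introl p0).
by case: (proc _ _ _ _ _) => [[C' p'] r'] [-> ->].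
Qed.

Lemma Qc_fill A st : Qc A st -> Qc A (fillS A st).
Proof. by case: st => [[C p] r] [CA [p0 cC]]; rewrite /= p0 top0 setU0. Qed.

Lemma Pc_proc A st h : Pc A st -> Pc A (proc rk rho A st h).
Proof.
case: st => [[C p] r] [CA [e|[p0 cC]]]; last first.
  have := proc_zero (A:=A) (C:=C) (h:=h) r (or_introl p0).
  by case: (proc _ _ _ _ _) => [[C' p'] r'] [-> ->]; split => //; right.
rewrite /proc.
set av := [set i in A :\: C | h \in rho i].
set k := minn p (minn #|av| (r h)).
have Ts : top k av \subset av := top_sub _ _ _.
have avs : av \subset A :\: C by apply/subsetP => x; rewrite inE => /andP[].
split.
  rewrite subUset CA /=; apply: subset_trans Ts (subset_trans avs _).
  exact: subsetDl.
left; rewrite cardU_disj; last first.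
  by move=> x /(subsetP Ts) /(subsetP avs); rewrite in_setD => /andP[].
rewrite top_card_le; last by rewrite /k; clear; lia.
move: e; rewrite /k; clear; lia.
Qed.

Lemma Pc_fill A st : Pc A st -> Qc A (fillS A st).
Proof.
case: st => [[C p] r] [CA [e|[p0 cC]]]; last by rewrite /= p0 top0 setU0.
split.
  rewrite subUset CA /=; apply: subset_trans (top_sub _ _ _) _; exact: subsetDl.
split => //.
rewrite cardU_disj; last first.
  by move=> x /(subsetP (top_sub _ _ _)); rewrite in_setD => /andP[].
rewrite top_card // cardsD (setIidPr CA).
have := subset_leq_card CA; move: e; clear; lia.
Qed.

Lemma Qc_iter A n (t : pstate I H * {set H}) : Qc A t.1 -> Qc A (iter n (stepI A) t).1.
Proof. apply: stepI_ind; [exact: Qc_proc | exact: Qc_fill]. Qed.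

Lemma term A : forall n (t : pstate I H * {set H}), Pc A t.1 -> #|t.2| < n -> Qc A (iter n (stepI A) t).1.
Proof.
elim=> // n IH [st remT] Pst lt; rewrite iterSr; simpl in Pst, lt.
rewrite {2}/stepI; case: eqP => [e0|ne].
  by apply: Qc_iter; apply: Pc_fill.
case E: (level rk rho A remT st) => [st' rem'].
apply: IH => /=.
  have -> : st' = (level rk rho A remT st).1 by rewrite E.
  rewrite /level /=; apply: foldl_ind => //; exact: Pc_proc.
have -> : rem' = (level rk rho A remT st).2 by rewrite E.
have := level_card A st (introN eqP ne); lia.
Qed.

Definition frozen (A : {set I}) (st : pstate I H) := st.1.2 = 0 \/ A \subset st.1.1.

Lemma frozen_step A C0 (t : pstate I H * {set H}) : t.1.1.1 = C0 -> frozen A t.1 ->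
  (stepI A t).1.1.1 = C0 /\ frozen A (stepI A t).1.
Proof.
move=> e f; apply: (stepI1 (P := fun st => st.1.1 = C0 /\ frozen A st)); last by split.
  move=> [[C p] r] h [eC fr]; simpl in eC, fr.
  have := proc_zero (A:=A) (C:=C) (p:=p) (h:=h) r.
  case: (proc _ _ _ _ _) => [[C' p'] r'] /= pz.
  suff hz : p = 0 \/ [set i in A :\: C | h \in rho i] = set0.
    by case: (pz hz) => -> ->.
  case: fr => /= [->|sub]; [by left | right].
  apply/setP => x; rewrite !inE; apply/negP => /andP[/andP[xC xA] _].
  by rewrite (subsetP sub) in xC.
move=> [[C p] r] /= [eC fr]; case: fr => /= [p0|sub].
  by rewrite p0 top0 setU0; split => //; left.
have -> : A :\: C = set0 by apply/eqP; rewrite setD_eq0.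
by rewrite top_set0 setU0; split => //; left.
Qed.

Definition RI (A : {set I}) (s : fstate I H) (t : pstate I H * {set H}) :=
  s.1.1.1.1 = t.1.1.1 /\
  (if s.2 then frozen A t.1 else s.1.1 = t.1 /\ s.1.2 = t.2).

Lemma RI_step A s (t : pstate I H * {set H}) : RI A s t -> RI A (stepn rk rho A s) (stepI A t).
Proof.
case: s => [[st remT] d]; case: t => [stI remI] /= [eC Hd].
case: d eC Hd => /= eC Hd.
  by have [a b] := @frozen_step A stI.1.1 (stI, remI) erefl Hd; split => //=; rewrite eC a.
case: Hd => est erem; subst stI remI.
case: st eC => [[C p] r] /= _.
rewrite /stepn /=.
case: ifP => [stop|nstop] /=.
  have fr : frozen A (C, p, r).
    case/orP: stop => [/eqP p0|/eqP e]; [by left | right => /=].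
    by rewrite -setD_eq0 e.
  have [a b] := frozen_step (t := ((C, p, r), remT)) erefl fr.
  by split.
case: ifP => e0.
  by split => //=; left.
by [].
Qed.

Lemma RI_iter A n s (t : pstate I H * {set H}) : RI A s t -> RI A (iter n (stepn rk rho A) s) (iter n (stepI A) t).
Proof. by elim: n => //= n IH /IH /RI_step. Qed.

Lemma Ch_ideal (A : {set I}) : ~~ [forall i in A, rho i == set0] ->
  Ch rk rho q kappa A = (iter #|H|.+1 (stepI A) (level rk rho A setT (set0, q, kappa))).1.1.1.
Proof.
rewrite /Ch => /negbTE ->.
case: (level rk rho A setT (set0, q, kappa)) => st1 rem1.
have : RI A (st1, rem1, false) (st1, rem1) by [].
move/(RI_iter #|H|.+1).
by case: (iter _ (stepn _ _ A) _) => [[[[C p] r] rem] d] [e _]; exact: e.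
Qed.

Lemma card_Ch (A : {set I}) : #|Ch rk rho q kappa A| = minn q #|A|.
Proof.
case t: [forall i in A, rho i == set0].
  by rewrite /Ch t top_card.
rewrite Ch_ideal ?t //.
set t0 := level rk rho A setT (set0, q, kappa).
have P0 : Pc A t0.1.
  rewrite /t0 /level /=; apply: foldl_ind; first exact: Pc_proc.
  by split; [exact: sub0set | left; rewrite cards0].
have := term P0 (n := #|H|.+1) _.
case: (iter _ _ _) => [[[C p] r] rem] /=.
by case=> [|_ [_ ->]] //; rewrite ltnS; exact: max_card.
Qed.

Lemma untyped_ideal (A : {set I}) n : [forall i in A, rho i == set0] ->
  (iter n (stepI A) (level rk rho A setT (set0, q, kappa))).1.1.1 \subset top q A.
Proof.
move=> /forall_inP un.
pose P (st : pstate I H) := (st.1.1 = set0 /\ st.1.2 = q) \/ (st.1.1 = top q A /\ st.1.2 = 0).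
have Pp : forall st h, P st -> P (proc rk rho A st h).
  move=> [[C p] r] h Pst.
  have : (proc rk rho A (C, p, r) h).1 = (C, p).
    apply: proc_zero; case: Pst => /= -[eC ep]; last by left.
    right; apply/setP => x; rewrite !inE eC; apply/negP => /andP[/andP[_ xA] hx].
    by move: (un _ xA) => /eqP e; rewrite e inE in hx.
  by case: (proc _ _ _ _ _) => [[C' p'] r'] [-> ->].
have Pf : forall st, P st -> P (fillS A st).
  move=> [[C p] r] [/= [-> ->]|/= [-> ->]]; right => /=.
    by rewrite setD0 set0U.
  by rewrite top0 setU0.
have : P (iter n (stepI A) (level rk rho A setT (set0, q, kappa))).1.
  apply: stepI_ind => //; rewrite /level /=; apply: foldl_ind => //.
  by left.
by case => -[-> _]; [exact: sub0set | exact: subxx].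
Qed.

Section Rel.
Variables (X : {set I}) (j : I).
Hypothesis jX : j \notin X.
Local Notation Y := (j |: X).

Definition coreC (U : {set H}) (CX : {set I}) pX (CY : {set I}) pY :=
  ((#|CX| + pX = q /\ #|CY| + pY = q) \/ (pX = 0 /\ pY = 0)) /\
  ((CX = CY /\ j \notin CY) \/
   (j \in CY /\ CY :\ j \subset CX /\ #|CX :\: CY| <= 1 /\
    forall z, z \in CX :\: CY -> pX = 0 \/
      forall h, h \in U -> (z \in typ h) = (j \in typ h))).

Lemma core_abs (U : {set H}) h (CX : {set I}) pX (CY : {set I}) pY (avX avY : {set I}) kX kY :
  h \in U -> minimal U h -> CX \subset X -> CY \subset Y ->
  (forall x, (x \in avX) = [&& x \in X, x \notin CX & h \in rho x]) ->
  (forall x, (x \in avY) = [&& x \in Y, x \notin CY & h \in rho x]) ->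
  kX = minn pX (minn #|avX| (kappa h - #|CX :&: typ h|)) ->
  kY = minn pY (minn #|avY| (kappa h - #|CY :&: typ h|)) ->
  coreC U CX pX CY pY ->
  coreC (U :\ h) (CX :|: top kX avX) (pX - kX) (CY :|: top kY avY) (pY - kY).
Proof.
move=> hU mn CXs CYs FX FY kXd kYd [cards EF].
set TX := top kX avX; set TY := top kY avY.
have TXs : TX \subset avX := top_sub _ _ _.
have TYs : TY \subset avY := top_sub _ _ _.
have [kXp kXa] := kmin kXd.
have [kYp kYa] := kmin kYd.
have cTX : #|TX| = kX by apply: top_card_le.
have cTY : #|TY| = kY by apply: top_card_le.
have jCX : j \notin CX by apply/negP => /(subsetP CXs); rewrite (negbTE jX).
have TXh : forall x, x \in TX -> [&& x \in X, x \notin CX & h \in rho x].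
  by move=> x /(subsetP TXs); rewrite FX.
have TYh : forall x, x \in TY -> [&& x \in Y, x \notin CY & h \in rho x].
  by move=> x /(subsetP TYs); rewrite FY.
have cUX : #|CX :|: TX| = #|CX| + kX.
  by rewrite cardU_disj -?cTX // => x /TXh /and3P[].
have cUY : #|CY :|: TY| = #|CY| + kY.
  by rewrite cardU_disj -?cTY // => x /TYh /and3P[].
have jCX' : j \notin CX :|: TX.
  by rewrite in_setU (negbTE jCX) /=; apply/negP => /TXh /and3P[]; rewrite (negbTE jX).
case: (boolP ((pX == 0) && (pY == 0))) => [/andP[/eqP pX0 /eqP pY0]|nfr].
  have kX0 : kX = 0 by rewrite kXd pX0 min0n.
  have kY0 : kY = 0 by rewrite kYd pY0 min0n.
  have -> : TX = set0 by apply/eqP; rewrite -cards_eq0 cTX kX0.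
  have -> : TY = set0 by apply/eqP; rewrite -cards_eq0 cTY kY0.
  rewrite !setU0 pX0 pY0 kX0 kY0; split; first by right.
  case: EF => [E|[a [b [c d]]]]; [by left | right; do 3 split => //].
  by move=> z _; left.
have [eX eY] : #|CX| + pX = q /\ #|CY| + pY = q.
  case: cards => // -[pX0 pY0]; by rewrite pX0 pY0 eqxx in nfr.
clear cards.
split; first by left; rewrite cUX cUY; clear -eX eY kXp kYp; lia.
case: EF => [[eC jC]|[jCY [sub [D1 tc]]]].
  subst CY.
  have pe : pX = pY by clear -eX eY; lia.
  have sXY : avX \subset avY.
    by apply/subsetP => x; rewrite FX FY in_setU1 => /and3P[-> -> ->]; rewrite orbT.
  have sYX : forall y, y \in avY -> y != j -> y \in avX.
    move=> y; rewrite FY FX in_setU1 => /and3P[/orP[/eqP->|->] -> ->] //.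
    by rewrite eqxx.
  have cav1 : #|avX| <= #|avY| := subset_leq_card sXY.
  have cav2 : #|avY| <= #|avX| + 1.
    have : avY \subset j |: avX.
      apply/subsetP => y yY; rewrite in_setU1; case: eqP => //= /eqP yj.
      exact: sYX.
    move/subset_leq_card; rewrite cardsU1; clear; lia.
  rewrite -pe in kYd.
  have kk := kE kXd kYd cav1 cav2.
  have LE : forall y, y \in TY -> y != j -> y \in TX.
    move=> y yT yj; have yX := sYX _ (subsetP TYs _ yT) yj.
    exact: top_small (top_subS sXY yX yT) (proj2 kk).
  case jT: (j \in TY).
    right; split; first by rewrite in_setU jT orbT.
    have sub' : (CX :|: TY) :\ j \subset CX :|: TX.
      apply/subsetP => y; rewrite in_setD1 !in_setU => /andP[yj /orP[->//|yT]].
      by rewrite LE ?orbT.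
    split => //.
    have jCY' : j \in CX :|: TY by rewrite in_setU jT orbT.
    have Dc := Dcard jCX' jCY' sub'.
    split; first by move: Dc; rewrite cUX cUY; move: (proj1 kk); clear; lia.
    move=> z; rewrite in_setD !in_setU negb_or => /andP[/andP[zC _] /orP[zC'|zT]].
      by rewrite zC' in zC.
    right => h' h'U; apply: (G mn _ _ h'U); rewrite typE.
      by case/and3P: (TXh _ zT).
    by case/and3P: (TYh _ jT).
  left.
  have eT : TX = TY.
    apply/eqP; rewrite eq_sym eqEcard cTX cTY (proj1 kk) andbT.
    apply/subsetP => y yT; apply: (LE _ yT); apply/eqP => e; move: yT.
    by rewrite e jT.
  by split; [rewrite eT | rewrite in_setU negb_or jC jT].
have Dc := Dcard jCX jCY sub.
have sXY : avX \subset avY.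
  apply/subsetP => x; rewrite FX FY in_setU1 => /and3P[xX xC ->].
  rewrite xX orbT andbT /=; apply/negP => xCY.
  have xj : x != j by apply/eqP => e; rewrite e (negbTE jX) in xX.
  by move: xC; rewrite (subsetP sub) // in_setD1 xj xCY.
have sYX : forall y, y \in avY -> y \notin avX -> y \in CX :\: CY.
  move=> y yY nX; move: yY; rewrite FY in_setU1 => /and3P[/orP[/eqP yj|yX] yC hy].
    by rewrite yj jCY in yC.
  rewrite in_setD yC /=; apply: contraR nX => yCX; by rewrite FX yX yCX hy.
have sTY : TY \subset avY := TYs.
have jTY : forall y, y \in TY -> y != j.
  by move=> y /TYh /and3P[_ yC _]; apply/eqP => e; rewrite e jCY in yC.
have jCY' : j \in CY :|: TY by rewrite in_setU jCY.
case: (posnP #|CX :\: CY|) => [D0|Dpos].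
  have e0 : CX :\: CY = set0 by apply/eqP; rewrite -cards_eq0 D0.
  have CXCY : CX \subset CY by rewrite -setD_eq0 e0.
  have eav : avX = avY.
    apply/eqP; rewrite eqEsubset sXY; apply/subsetP => y yY.
    case yX: (y \in avX) => //; by have := sYX _ yY (negbT yX); rewrite e0 inE.
  have pe : pX = pY.+1 by move: Dc; rewrite D0; clear -eX eY; lia.
  have c1 : #|CX :&: typ h| <= #|CY :&: typ h| by apply/subset_leq_card/setSI.
  have c2 : #|CY :&: typ h| <= #|CX :&: typ h| + 1.
    have : CY :&: typ h \subset j |: (CX :&: typ h).
      apply/subsetP => y; rewrite in_setI in_setU1 in_setI => /andP[yC yh].
      case: eqP => //= /eqP yj; rewrite yh andbT; apply: (subsetP sub).
      by rewrite in_setD1 yj yC.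
    move/subset_leq_card; rewrite cardsU1; clear; lia.
  have c3 : h \notin rho j -> #|CY :&: typ h| <= #|CX :&: typ h|.
    move=> jh; apply: subset_leq_card; apply/subsetP => y.
    rewrite !in_setI => /andP[yC yh]; rewrite yh andbT; apply: (subsetP sub).
    rewrite in_setD1 yC andbT; apply/eqP => e; move: yh; by rewrite e typE (negbTE jh).
  rewrite pe eav in kXd.
  have [k1 [k2 k3]] := kF0 kXd kYd c1 c2.
  have TYX : TY \subset TX by rewrite /TX eav; apply: top_monok.
  right; split => //.
  have sub' : (CY :|: TY) :\ j \subset CX :|: TX.
    apply/subsetP => y; rewrite in_setD1 !in_setU => /andP[yj /orP[yC|yT]].
      by rewrite (subsetP sub) // in_setD1 yj yC.
    by rewrite (subsetP TYX) // orbT.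
  have Dc' := Dcard jCX' jCY' sub'.
  split => //; split.
    by move: Dc' Dc; rewrite cUX cUY D0; clear -k2; lia.
  move=> z; rewrite in_setD !in_setU negb_or => /andP[/andP[zCY zTY] /orP[zCX|zTX]].
    by rewrite (subsetP CXCY) in zCY.
  case jh: (h \in rho j).
    right => h' h'U; apply: (G mn _ _ h'U); rewrite typE //.
    by case/and3P: (TXh _ zTX).
  left.
  have cc : #|CX :&: typ h| = #|CY :&: typ h|.
    by apply/eqP; rewrite eqn_leq c1 c3 ?jh.
  have kne : kX != kY.
    apply/eqP => kXY; move: zTY; rewrite /TY -kXY -eav.
    by rewrite -/TX zTX.
  have kY1 : kX = kY + 1 by move: k1 k2 kne; clear; lia.
  by move: (k3 cc kY1); rewrite pe; move: kY1; clear; lia.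
have D1' : #|CX :\: CY| = 1 by move: Dpos D1; clear; lia.
have pe : pX = pY by move: Dc; rewrite D1'; clear -eX eY; lia.
have pX0 : pX != 0 by move: nfr; rewrite -pe andbb.
have /cards1P [z zD] : #|CX :\: CY| == 1 by rewrite D1'.
have : z \in CX :\: CY by rewrite zD set11.
rewrite in_setD => /andP[zCY zCX].
have tcz : forall h', h' \in U -> (z \in typ h') = (j \in typ h').
  case: (tc z); [by rewrite zD set11 | by move/eqP: pX0 | by []].
have zj := tcz h hU.
have cXY : #|CX :&: typ h| = #|CY :&: typ h|.
  have e : (CX :&: typ h) :\ z = (CY :&: typ h) :\ j.
    apply/setP => x; rewrite !in_setD1 !in_setI.
    case xz: (x == z); case xj: (x == j) => //=.
    - by rewrite (eqP xz) (negbTE zCY).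
    - by rewrite (eqP xj) (negbTE jCX).
    - congr (_ && _); apply/idP/idP => a.
        apply/negPn/negP => xC; suff: x \in [set z] by rewrite in_set1 xz.
        by rewrite -zD in_setD xC a.
      by apply: (subsetP sub); rewrite in_setD1 xj a.
  have := cardsD1 z (CX :&: typ h); have := cardsD1 j (CY :&: typ h).
  rewrite e !in_setI zCX jCY /= zj; clear; lia.
have DD : forall y, y \in CX -> y \notin CY -> y = z.
  by move=> y yC yC'; apply/set1P; rewrite -zD in_setD yC yC'.
case jh: (h \in rho j).
  have zh : h \in rho z by rewrite -typE zj typE.
  have zX : z \in X := subsetP CXs _ zCX.
  have eavY : avY = z |: avX.
    apply/setP => y; rewrite in_setU1; case yz: (y == z).
      by rewrite (eqP yz) FY in_setU1 zX orbT zCY zh.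
    case yX: (y \in avX); first by rewrite (subsetP sXY).
    apply/negP => yY; move: (sYX _ yY (negbT yX)); rewrite zD in_set1 yz.
    by [].
  have zav : z \notin avX by rewrite FX zCX andbF.
  have cav : #|avY| = #|avX| + 1 by rewrite eavY cardsU1 zav addnC.
  rewrite -pe -cXY in kYd.
  have cav1 : #|avX| <= #|avY| by rewrite cav; clear; lia.
  have cav2 : #|avY| <= #|avX| + 1 by rewrite cav.
  have kk := kE kXd kYd cav1 cav2.
  have LE : forall y, y \in TY -> y != z -> y \in TX.
    move=> y yT yz.
    have yX : y \in avX.
      by move: (subsetP TYs _ yT); rewrite eavY in_setU1 (negbTE yz).
    exact: top_small (top_subS sXY yX yT) (proj2 kk).
  right; split => //.
  have sub' : (CY :|: TY) :\ j \subset CX :|: TX.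
    apply/subsetP => y; rewrite in_setD1 !in_setU => /andP[yj /orP[yC|yT]].
      by rewrite (subsetP sub) // in_setD1 yj yC.
    case yz: (y == z); first by rewrite (eqP yz) zCX.
    by rewrite LE ?orbT ?yz.
  have Dc' := Dcard jCX' jCY' sub'.
  split => //; split.
    by move: Dc' Dc; rewrite cUX cUY D1'; move: (proj1 kk); clear; lia.
  move=> y; rewrite in_setD !in_setU negb_or => /andP[/andP[yCY yTY] /orP[yCX|yTX]].
    by right; apply: restrictU; rewrite (DD _ yCX yCY); exact: tcz.
  right => h' h'U; apply: (G mn _ _ h'U); rewrite typE //.
  by case/and3P: (TXh _ yTX).
have zh : h \notin rho z by rewrite -typE zj typE jh.
have eav : avX = avY.
  apply/eqP; rewrite eqEsubset sXY; apply/subsetP => y yY.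
  case yX: (y \in avX) => //.
  move: (sYX _ yY (negbT yX)); rewrite zD in_set1 => /eqP e.
  by move: yY; rewrite e FY (negbTE zh) !andbF.
have kXY : kX = kY by rewrite kXd kYd eav pe cXY.
have eT : TX = TY by rewrite /TX /TY eav kXY.
right; split => //.
have sub' : (CY :|: TY) :\ j \subset CX :|: TX.
  apply/subsetP => y; rewrite in_setD1 !in_setU => /andP[yj /orP[yC|yT]].
    by rewrite (subsetP sub) // in_setD1 yj yC.
  by rewrite eT yT orbT.
split => //.
have DD' : (CX :|: TX) :\: (CY :|: TY) \subset CX :\: CY.
  apply/subsetP => y; rewrite !in_setD !in_setU !negb_or eT.
  by case/andP => /andP[-> /negbTE ->]; rewrite orbF.
split; first by apply: leq_trans (subset_leq_card DD') D1.
move=> y /(subsetP DD') yD; right; apply: restrictU.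
move: yD; rewrite in_setD => /andP[yC2 yC1]; rewrite (DD _ yC1 yC2); exact: tcz.
Qed.


Lemma core_fill (U U' : {set H}) (CX : {set I}) pX (CY : {set I}) pY : CX \subset X -> CY \subset Y ->
  coreC U CX pX CY pY ->
  coreC U' (CX :|: top pX (X :\: CX)) 0 (CY :|: top pY (Y :\: CY)) 0.
Proof.
move=> CXs CYs [cards EF].
set avX := X :\: CX; set avY := Y :\: CY.
set TX := top pX avX; set TY := top pY avY.
case: (boolP ((pX == 0) && (pY == 0))) => [/andP[/eqP pX0 /eqP pY0]|nfr].
  have -> : TX = set0 by apply/eqP; rewrite -cards_eq0 top_card // pX0 min0n.
  have -> : TY = set0 by apply/eqP; rewrite -cards_eq0 top_card // pY0 min0n.
  rewrite !setU0; split; first by right.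
  case: EF => [E|[a [b [c d]]]]; [by left | right; do 3 split => //].
  by move=> z _; left.
have [eX eY] : #|CX| + pX = q /\ #|CY| + pY = q.
  case: cards => // -[pX0 pY0]; by rewrite pX0 pY0 eqxx in nfr.
clear cards.
split; first by right.
have jCX : j \notin CX by apply/negP => /(subsetP CXs); rewrite (negbTE jX).
have cavX : #|avX| = #|X| - #|CX| by rewrite /avX cardsD (setIidPr CXs).
have cY1 : #|Y| = #|X|.+1 by rewrite cardsU1 jX add1n.
have cavY : #|avY| = #|X|.+1 - #|CY| by rewrite /avY cardsD (setIidPr CYs) cY1.
have lX : #|CX| <= #|X| := subset_leq_card CXs.
have lY : #|CY| <= #|X|.+1 by rewrite -cY1; exact: subset_leq_card.
have cUX : #|CX :|: TX| = #|CX| + minn pX #|avX|.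
  rewrite cardU_disj ?top_card // => x /(subsetP (top_sub _ _ _)).
  by rewrite in_setD => /andP[].
have cUY : #|CY :|: TY| = #|CY| + minn pY #|avY|.
  rewrite cardU_disj ?top_card // => x /(subsetP (top_sub _ _ _)).
  by rewrite in_setD => /andP[].
have cle : #|CX :|: TX| <= #|CY :|: TY|.
  rewrite cUX cUY cavX cavY; clear -eX eY lX lY; lia.
have jCX' : j \notin CX :|: TX.
  rewrite in_setU (negbTE jCX) /=; apply/negP => /(subsetP (top_sub _ _ _)).
  by rewrite in_setD (negbTE jX) andbF.
case: EF => [[eC jC]|[jCY [sub [D1 tc]]]].
  subst CY.
  have pe : pX = pY by clear -eX eY; lia.
  have sXY : avX \subset avY.
    by apply/subsetP => x; rewrite !in_setD in_setU1 => /andP[-> ->]; rewrite orbT.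
  have LE : forall y, y \in TY -> y != j -> y \in TX.
    move=> y yT yj.
    have yX : y \in avX.
      move: (subsetP (top_sub _ _ _) _ yT); rewrite !in_setD in_setU1 (negbTE yj).
      by [].
    by rewrite /TX pe; exact: top_subS sXY yX yT.
  case jT: (j \in TY).
    right; split; first by rewrite in_setU jT orbT.
    have sub' : (CX :|: TY) :\ j \subset CX :|: TX.
      apply/subsetP => y; rewrite in_setD1 !in_setU => /andP[yj /orP[->//|yT]].
      by rewrite LE ?orbT.
    split => //.
    have jCY' : j \in CX :|: TY by rewrite in_setU jT orbT.
    have Dc := Dcard jCX' jCY' sub'.
    split; first by move: Dc cle; clear; lia.
    by move=> z _; left.
  left.
  have eT : TX = TY.
    have cT : #|TX| <= #|TY|.
      by rewrite !top_card // pe; move: (subset_leq_card sXY); clear; lia.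
    apply/eqP; rewrite eq_sym eqEcard cT andbT.
    apply/subsetP => y yT; apply: (LE _ yT); apply/eqP => e; move: yT.
    by rewrite e jT.
  by split; [rewrite eT | rewrite in_setU negb_or jC jT].
have Dc := Dcard jCX jCY sub.
have ple : pY <= pX by move: Dc D1; clear -eX eY; lia.
have sXY : avX \subset avY.
  apply/subsetP => x; rewrite !in_setD in_setU1 => /andP[xC xX].
  rewrite xX orbT andbT; apply/negP => xCY.
  have xj : x != j by apply/eqP => e; rewrite e (negbTE jX) in xX.
  by move: xC; rewrite (subsetP sub) // in_setD1 xj xCY.
right; split; first by rewrite in_setU jCY.
have sub' : (CY :|: TY) :\ j \subset CX :|: TX.
  apply/subsetP => y; rewrite in_setD1 !in_setU => /andP[yj /orP[yC|yT]].
    by rewrite (subsetP sub) // in_setD1 yj yC.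
  case yC: (y \in CX) => //=.
  have yX : y \in avX.
    move: (subsetP (top_sub _ _ _) _ yT); rewrite !in_setD in_setU1 (negbTE yj) yC.
    by case/andP.
  exact: top_small (top_subS sXY yX yT) (or_introl ple).
have jCY' : j \in CY :|: TY by rewrite in_setU jCY.
have Dc' := Dcard jCX' jCY' sub'.
split => //; split; first by move: Dc' cle; clear; lia.
by move=> z _; left.
Qed.

Definition REL U (sX sY : pstate I H) :=
  good X U sX /\ good Y U sY /\
  (let: (CX, pX, _) := sX in let: (CY, pY, _) := sY in coreC U CX pX CY pY).

Lemma rel_proc (U : {set H}) h sX sY : h \in U -> minimal U h -> REL U sX sY ->
  REL (U :\ h) (proc rk rho X sX h) (proc rk rho Y sY h).
Proof.
case: sX => [[CX pX] rX]; case: sY => [[CY pY] rY] hU mn [gX [gY c]].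
split; first exact: good_proc.
split; first exact: good_proc.
have [CXs rXc] := gX; have [CYs rYc] := gY.
rewrite /proc /=; apply: core_abs => //.
- by move=> x; rewrite inE in_setD; case: (x \in X); case: (x \in CX).
- by move=> x; rewrite inE in_setD; case: (x \in Y); case: (x \in CY).
- by rewrite rXc.
- by rewrite rYc.
Qed.

Lemma rel_fill sX sY : REL set0 sX sY -> REL set0 (fillS X sX) (fillS Y sY).
Proof.
move=> [gX [gY c]]; split; first exact: good_fill.
split; first exact: good_fill.
case: sX gX c => [[CX pX] rX] [CXs _]; case: sY gY => [[CY pY] rY] [CYs _] c.
exact: core_fill c.
Qed.

Lemma rel_foldl (remT Hn : {set H}) (s : seq H) :
  (forall h, h \in Hn -> forall h', h' \in remT -> ~~ contains h h') ->
  uniq s -> forall (U : {set H}) sX sY,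
  U \subset remT -> (forall h, h \in s -> h \in Hn -> h \in U) ->
  REL U sX sY ->
  REL (U :\: [set h | (h \in s) && (h \in Hn)])
    (foldl (fun st h => if h \in Hn then proc rk rho X st h else st) sX s)
    (foldl (fun st h => if h \in Hn then proc rk rho Y st h else st) sY s).
Proof.
move=> mnH; elim: s => [|a s IH] /=.
  move=> _ U sX sY _ _ R.
  suff -> : [set h | (h \in [::]) && (h \in Hn)] = set0 by rewrite setD0.
  by apply/setP => h; rewrite !inE.
move=> /andP[an us] U sX sY sU hs R.
case ha: (a \in Hn).
  have aU : a \in U by apply: hs; rewrite ?mem_head.
  have mn : minimal U a by move=> h' /(subsetP sU); exact: mnH.
  have R' := rel_proc aU mn R.
  have sU' : U :\ a \subset remT := subset_trans (subsetDl _ _) sU.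
  have hs' : forall h, h \in s -> h \in Hn -> h \in U :\ a.
    move=> h hs0 hH; rewrite in_setD1 hs ?inE ?hs0 ?orbT // andbT.
    by apply/eqP => e; rewrite -e hs0 in an.
  have := IH us _ _ _ sU' hs' R'.
  congr REL; apply/setP => x; rewrite !inE.
  by case: eqP => [->|] /=; rewrite ?ha ?(negbTE an) ?andbF ?andbT.
have hs' : forall h, h \in s -> h \in Hn -> h \in U.
  by move=> h hs0; apply: hs; rewrite inE hs0 orbT.
have := IH us _ _ _ sU hs' R.
congr REL; apply/setP => x; rewrite !inE.
by case: eqP => [->|] /=; rewrite ?ha ?andbF.
Qed.

Lemma rel_level remT sX sY : REL remT sX sY ->
  REL (remT :\: minimal_types rho remT)
    (level rk rho X remT sX).1 (level rk rho Y remT sY).1.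
Proof.
move=> R; rewrite /level /=.
have mnH : forall h, h \in minimal_types rho remT -> forall h', h' \in remT ->
    ~~ contains h h'.
  by move=> h; rewrite inE => /andP[_ /forall_inP mn].
have hs : forall h, h \in enum H -> h \in minimal_types rho remT -> h \in remT.
  by move=> h _; rewrite inE => /andP[].
have := rel_foldl mnH (enum_uniq _) (subxx remT) hs R.
congr REL; apply/setP => x; rewrite !inE mem_enum.
by [].
Qed.

Definition RELI (tX tY : pstate I H * {set H}) := tX.2 = tY.2 /\ REL tX.2 tX.1 tY.1.

Lemma rel_stepI tX tY : RELI tX tY -> RELI (stepI X tX) (stepI Y tY).
Proof.
case: tX => stX remX; case: tY => stY remY [/= e R]; subst remY.
rewrite /stepI; case: eqP => [e0|ne].
  by split => //=; rewrite e0 in R *; exact: rel_fill.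
split; first by [].
exact: rel_level.
Qed.

Lemma rel_iter n tX tY : RELI tX tY -> RELI (iter n (stepI X) tX) (iter n (stepI Y) tY).
Proof. by elim: n => //= n IH /IH /rel_stepI. Qed.

Lemma rel_start n :
  RELI (iter n (stepI X) (level rk rho X setT (set0, q, kappa)))
       (iter n (stepI Y) (level rk rho Y setT (set0, q, kappa))).
Proof.
apply: rel_iter; split; first by [].
apply: rel_level; split.
  by split; [exact: sub0set | move=> h _; rewrite set0I cards0 subn0].
split.
  by split; [exact: sub0set | move=> h _; rewrite set0I cards0 subn0].
split; first by left; rewrite cards0.
by left; split; rewrite ?inE.
Qed.

Lemma subst_ideal n i : i != j ->
  i \in (iter n (stepI Y) (level rk rho Y setT (set0, q, kappa))).1.1.1 ->
  i \in (iter n (stepI X) (level rk rho X setT (set0, q, kappa))).1.1.1.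
Proof.
move=> ij; have := rel_start n.
case: (iter n (stepI X) _) => [[[CX pX] rX] remX].
case: (iter n (stepI Y) _) => [[[CY pY] rY] remY] [_ [_ [_ [_ EF]]]] /= iC.
case: EF => [[-> _] //|[_ [sub _]]].
by apply: (subsetP sub); rewrite in_setD1 ij.
Qed.

End Rel.

End Main.

Theorem proposition2 (I H : finType) (rk : I -> nat) (rk_inj : injective rk)
    (rho : I -> {set H}) (hier : hierarchical rho) (q : nat) (kappa : H -> nat) :
  (forall (A : {set I}) (i j : I), i \notin A -> j \notin A -> i != j ->
     i \in Ch rk rho q kappa (A :|: [set i; j]) ->
     i \in Ch rk rho q kappa (i |: A)) /\
  (forall (A : {set I}) (i : I),
     #|Ch rk rho q kappa A| <= #|Ch rk rho q kappa (i |: A)|).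
Proof.
split.
  move=> A i j iA jA ij.
  have jX : j \notin i |: A by rewrite in_setU1 negb_or eq_sym ij.
  have eY : A :|: [set i; j] = j |: (i |: A).
    apply/setP => x; rewrite !inE.
    by case: (x == i); case: (x == j); case: (x \in A).
  have iX : i \in i |: A by rewrite in_setU1 eqxx.
  rewrite eY => iC.
  case tY: [forall x in j |: (i |: A), rho x == set0].
    have tX : [forall x in i |: A, rho x == set0].
      apply/forall_inP => x xX; move/forall_inP: tY; apply.
      by rewrite in_setU1 xX orbT.
    move: iC; rewrite /Ch tY tX => iT.
    exact: top_subS (subsetUr _ _) iX iT.
  rewrite Ch_ideal ?tY // in iC.
  have iCX := subst_ideal rk_inj hier jX ij iC.
  case tX: [forall x in i |: A, rho x == set0].
    by rewrite /Ch tX; apply: (subsetP (untyped_ideal rk q kappa _ tX)) _ iCX.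
  by rewrite Ch_ideal ?tX.
move=> A i; rewrite !(card_Ch rk_inj).
have := subset_leq_card (subsetUr [set i] A); lia.
Qed.
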